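(* Let $H = -\Delta + V$ on $\ell^2(\mathbb{Z}^d)$, with $V$ a real-valued potential, and let $E$ be an eigenvalue of $H$ having two linearly independent eigenfunctions $\varphi_1,\varphi_2\in\ell^2(\mathbb{Z}^d)$, each with $\beta$-decay for some $\beta > \frac d2$. Then there exists a constant $C = C_{d,\beta,\varphi_1,\varphi_2}<\infty$ (depending only on $d,\beta,\varphi_1,\varphi_2$) such that, setting $\varepsilon_L = C L^{-\beta+\frac d2}$ and $J_L = [E-\varepsilon_L, E+\varepsilon_L]$, we have $\operatorname{tr}\chi_{J_L}(H_L)\ge 2$ for all sufficiently large $L$.
   Context: $\Delta(x,y)=1$ if $|x-y|=1$ and $\Delta(x,y)=0$ otherwise; $V$ acts by multiplication. Write $\langle x\rangle=\sqrt{1+|x|^2}$; $\varphi\in\ell^2(\mathbb{Z}^d)$ has $\beta$-decay if $|\varphi(x)|\le C_\varphi\langle x\rangle^{-\beta}$ for all $x$ and some $C_\varphi<\infty$. For $L>0$, $\Lambda_L$ is the open box in $\mathbb{Z}^d$ centered at the origin with side of length $L$, $\chi_L$ its characteristic function, and $H_L=\chi_L H\chi_L$ is the restriction of $H$ to $\ell^2(\Lambda_L)$ with zero boundary conditions outside $\Lambda_L$ (identifying $\ell^2(\Lambda_L)$ with $\chi_L\ell^2(\mathbb{Z}^d)$). For a set $J$, $\chi_J$ denotes its characteristic function, so $\chi_J(H_L)$ is the spectral projection of $H_L$ onto $J$. *)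

(* Defs.v *)
From HB Require Import structures.
From mathcomp Require Import all_boot all_order all_algebra.
From mathcomp Require Import all_classical all_reals all_analysis.
From mathcomp Require Import polyrcf.
Set Implicit Arguments. Unset Strict Implicit. Unset Printing Implicit Defensive.
Import Order.TTheory GRing.Theory Num.Theory.
Local Open Scope ring_scope.

Section Defs.
Variable R : realType.

Definition Zd (d : nat) := 'rV[int]_d.

Definition normsq {d} (x : Zd d) : R := \sum_(i < d) ((x 0 i)%:~R) ^+ 2.
Definition japan {d} (x : Zd d) : R := Num.sqrt (1 + normsq x).

Definition Delta {d} (x y : Zd d) : R := if normsq (x - y) == 1 then 1 else 0.

Definition evec d (i : 'I_d) : Zd d := delta_mx 0 i.

(* (H phi)(x) = -(Delta phi)(x) + V(x) phi(x), where
   (Delta phi)(x) = sum_{|y - x| = 1} phi(y) = sum_i (phi(x+e_i) + phi(x-e_i)). *)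
Definition Hop {d} (V : Zd d -> R) (phi : Zd d -> R) (x : Zd d) : R :=
  - (\sum_(i < d) (phi (x + evec i) + phi (x - evec i))) + V x * phi x.

Definition sq_summable {d} (phi : Zd d -> R) : Prop :=
  (\esum_(x in [set: Zd d]) ((phi x) ^+ 2)%:E < +oo)%E.

Definition has_decay {d} (beta : R) (phi : Zd d -> R) : Prop :=
  exists Cphi : R, forall x : Zd d, `|phi x| <= Cphi * (japan x) `^ (- beta).

Definition lin_indep2 {d} (phi1 phi2 : Zd d -> R) : Prop :=
  forall a b : R, (forall x, a * phi1 x + b * phi2 x = 0) -> a = 0 /\ b = 0.

(* Open box Lambda_L = (-L/2, L/2)^d  intersected with Z^d, enumerated as a
   (duplicate free) sequence: coordinates are searched in [-K, K] with
   K = |floor L| + 1 > L/2, then filtered. *)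
Definition boxK (L : R) : nat := (`|Num.floor L|%N).+1.
Definition in_box {d} (L : R) (x : Zd d) : bool :=
  [forall i : 'I_d, `|(x 0 i)%:~R| < L / 2 :> R].
Definition box_pts d (L : R) : seq (Zd d) :=
  [seq x <- map (fun f : {ffun 'I_d -> 'I_((boxK L).*2.+1)} =>
                    (\row_i ((nat_of_ord (f i))%:Z - (boxK L)%:Z) : Zd d))
             (enum {ffun 'I_d -> 'I_((boxK L).*2.+1)}) | in_box L x].

(* H_L = chi_L H chi_L as a matrix on l^2(Lambda_L), in the basis of point masses. *)
Definition HL {d} (V : Zd d -> R) (L : R) : 'M[R]_(size (box_pts d L)) :=
  \matrix_(i, j) (- Delta (box_pts d L)`_i (box_pts d L)`_j
                  + (i == j)%:R * V (box_pts d L)`_i).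

(* tr chi_J(A) for a (symmetric) real matrix A: the trace of the spectral
   projection onto the span of the eigenspaces for the eigenvalues in J,
   i.e. the dimension of that span. *)
Definition tr_specproj n (J : interval R) (A : 'M[R]_n) : nat :=
  \rank (\sum_(a <- rootsR (char_poly A) | a \in J) eigenspace A a)%MS.

End Defs.

(* Main.v *)
Require Import Defs.
From HB Require Import structures.
From mathcomp Require Import all_boot all_order all_algebra.
From mathcomp Require Import all_classical all_reals all_analysis.
From mathcomp Require Import polyrcf.
From mathcomp Require Import complex spectral sesquilinear.
From mathcomp Require Import lra zify ring.
Set Implicit Arguments. Unset Strict Implicit. Unset Printing Implicit Defensive.
Import Order.TTheory GRing.Theory Num.Theory.
Local Open Scope ring_scope.
Section Spec.
Variable R : rcfType.
Local Open Scope sesquilinear_scope.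
Local Notation C := (R[i]).
Local Notation f := (@real_complex_def R (Phant R)).

Lemma sub_sum_seq n (s : seq R) (P : pred R) (B : R -> 'M[R]_n) x m (A : 'M[R]_(m, n)) :
  x \in s -> P x -> (A <= B x)%MS -> (A <= (\sum_(y <- s | P y) B y)%MS)%MS.
Proof.
elim: s => // y s IH; rewrite in_cons big_cons => /orP[/eqP <-|xs] Px sAB.
  by rewrite Px; apply: submx_trans sAB (addsmxSl _ _).
case: (P y); last exact: IH.
by apply: submx_trans (IH xs Px sAB) (addsmxSr _ _).
Qed.


Lemma rank_rowsub_inj (F : fieldType) n m (g : 'I_m -> 'I_n) :
  injective g -> \rank (rowsub g (1%:M : 'M[F]_n)) = m.
Proof.
move=> ginj; apply/eqP; apply/row_freeP; exists (rowsub g (1%:M : 'M[F]_n))^T.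
apply/matrixP => a b; rewrite !mxE (bigD1 (g a)) //= !mxE eqxx mul1r.
rewrite big1 ?addr0; last by move=> k /negbTE hk; rewrite !mxE eq_sym hk mul0r.
by rewrite (inj_eq ginj) eq_sym.
Qed.

Lemma lincomb_entry (K : pzRingType) n (a b : K) (x y : 'rV[K]_n) i :
  (a *: x + b *: y) 0 i = a * x 0 i + b * y 0 i.
Proof. by rewrite !mxE. Qed.

Lemma herm_map n (A : 'M[R]_n) : A^T = A -> map_mx f A \is hermsymmx.
Proof.
move=> As; apply/is_hermitianmxP; rewrite expr0 scale1r.
apply/matrixP => i j; rewrite !mxE -[in LHS]As mxE.
exact: (esym (conjc_real _)).
Qed.


Lemma norm2_unitary n (P : 'M[C]_n) (y : 'rV[C]_n) : P \is unitarymx ->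
  \sum_j `|(y *m P) 0 j| ^+ 2 = \sum_j `|y 0 j| ^+ 2.
Proof.
move=> /unitarymxP PP.
have E (z : 'rV[C]_n) : \sum_j `|z 0 j| ^+ 2 = (z *m z ^t* ) 0 0.
  by rewrite !mxE; apply: eq_bigr => j _; rewrite !mxE sqr_normc.
by rewrite !E trmx_mul map_mxM mulmxA -(mulmxA y) PP mulmx1.
Qed.

Lemma spec2 n (A : 'M[R]_n) (E eps : R) (u1 u2 : 'rV[C]_n) :
  A^T = A -> 0 <= eps ->
  (forall a b : C, a *: u1 + b *: u2 = 0 -> a = 0 /\ b = 0) ->
  (forall a b : C, \sum_j `|((a *: u1 + b *: u2) *m (map_mx f A - (f E)%:M)) 0 j| ^+ 2
        <= (f eps) ^+ 2 * \sum_j `|(a *: u1 + b *: u2) 0 j| ^+ 2) ->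
  (2 <= \rank (\sum_(x <- rootsR (char_poly A) | x \in (`[E - eps, E + eps])%R) eigenspace A x)%MS)%N.
Proof.
move=> As eps0 indep hyp.
set J := `[E - eps, E + eps].
set S := (\sum_(x <- _ | _) _)%MS.
set Ac := map_mx f A.
have Aherm := herm_map As.
have /orthomx_spectralP Adec := hermitian_normalmx Aherm.
set P := spectralmx Ac in Adec; set X := spectral_diag Ac in Adec.
have Pu : P \is unitarymx := spectral_unitarymx Ac.
have Xreal : X \is a realmx := hermitian_spectral_diag_real Aherm.
have PPt : P *m P ^t* = 1%:M by apply/unitarymxP.
have PtP : P ^t* *m P = 1%:M by apply: mulmx1C.
have iP : invmx P = P ^t* by rewrite invmx_unitary.
have PA : P *m Ac = diag_mx X *m P.
  by rewrite [X in P *m X]Adec iP !mulmxA PPt mul1mx.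
pose lam i := complex.Re (X 0 i).
have Xlam i : X 0 i = f (lam i) by rewrite /lam RRe_real //; apply: (mxOverP Xreal).
have rowE i : row i P *m Ac = X 0 i *: row i P.
  by rewrite -row_mul PA row_mul row_diag_mx -scalemxAl -rowE.
have rowP0 k : row k P != 0.
  apply/negP => /eqP h; have := congr1 (mulmx^~ (P ^t* )) h.
  rewrite -row_mul PPt mul0mx => /rowP /(_ k); rewrite !mxE eqxx /=.
  by move/eqP; rewrite oner_eq0.
have inS k : lam k \in J -> (row k P <= map_mx f S)%MS.
  move=> Jk.
  have h1 : (row k P <= eigenspace Ac (f (lam k)))%MS.
    by apply/eigenspaceP; rewrite rowE Xlam.
  have ev : eigenvalue A (lam k).
    rewrite /eigenvalue -(map_mx_eq0 f) map_eigenspace.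
    apply/negP => /eqP h; move: h1; rewrite h submx0 => /eqP hk.
    by move: (rowP0 k); rewrite hk eqxx.
  have rk : lam k \in rootsR (char_poly A).
    rewrite -(roots_on_rootsR (monic_neq0 (char_poly_monic A))).
    by rewrite in_itv /= -eigenvalue_root_char ev.
  have eigR : (eigenspace A (lam k) <= S)%MS.
    exact: (sub_sum_seq rk Jk (submx_refl _)).
  rewrite -(map_submx f) map_eigenspace in eigR; exact: submx_trans h1 eigR.
case: (boolP [exists i, exists j, [&& i != j, lam i \in J & lam j \in J]]).
  move=> /existsP [i /existsP [j /and3P [ij Ji Jj]]].
  pose g (t : 'I_2) := if t == ord0 then i else j.
  have ginj : injective g.
    move=> t1 t2; rewrite /g.
    case: t1 => [[|[|?]] p1] //; case: t2 => [[|[|?]] p2] //= e;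
      try (by apply/val_inj); by rewrite e eqxx in ij || rewrite -e eqxx in ij.
  have sub : (rowsub g P <= map_mx f S)%MS.
    apply/row_subP => t; rewrite row_rowsub; apply: inS; rewrite /g.
    by case: ifP.
  rewrite -(mxrank_map f); apply: leq_trans (mxrankS sub).
  rewrite rowsubE mxrankMfree; last by rewrite row_free_unit; apply: unitarymx_unit.
  by rewrite rank_rowsub_inj.
move=> noPair.
have uniqJ i j : lam i \in J -> lam j \in J -> i = j.
  move=> Ji Jj; apply/eqP; apply: contraNT noPair => ij.
  by apply/existsP; exists i; apply/existsP; exists j; rewrite ij Ji Jj.
set v1 := u1 *m P ^t*; set v2 := u2 *m P ^t*.
suff key : forall a b : C, ~ (a = 0 /\ b = 0) ->
    (forall i, lam i \in J -> (a *: v1 + b *: v2) 0 i = 0) -> False.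
  exfalso; case: (pickP (fun i => lam i \in J)) => [i0 Ji0 | noJ]; last first.
    by apply: (key 1 0) => [[/eqP]|i]; rewrite ?oner_eq0 ?noJ.
  case: (eqVneq (v1 0 i0) 0) => [v10|v10].
    apply: (key 1 0) => [[/eqP]|i Ji]; rewrite ?oner_eq0 //.
    by rewrite (uniqJ _ _ Ji Ji0) lincomb_entry v10 mul0r addr0 mulr0.
  apply: (key (v2 0 i0) (- v1 0 i0)) => [[_ /eqP]|i Ji]; rewrite ?oppr_eq0 ?(negbTE v10) //.
  by rewrite (uniqJ _ _ Ji Ji0) lincomb_entry mulNr mulrC subrr.
move=> a b ab0 cJ.
set w := a *: u1 + b *: u2.
set c := w *m P ^t*.
have cE : c = a *: v1 + b *: v2 by rewrite /c /w mulmxDl -!scalemxAl.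
have wE : w = c *m P by rewrite /c -mulmxA PtP mulmx1.
have w0 : w != 0 by apply/eqP => /indep.
have [j0 cj0] : exists j, c 0 j != 0.
  apply/existsP; apply: contraNT w0 => /existsPn h.
  rewrite wE; apply/eqP.
  have -> : c = 0.
    by apply/rowP => j; rewrite [RHS]mxE; apply/eqP; move: (h j); rewrite negbK.
  by rewrite mul0mx.
have lhsE : w *m (Ac - (f E)%:M) = (c *m (diag_mx X - (f E)%:M)) *m P.
  rewrite wE !mulmxBr -mulmxA PA mulmxA mulmxBl.
  by rewrite !mul_mx_scalar scalemxAl.
have H := hyp a b; rewrite -/w lhsE norm2_unitary // wE norm2_unitary // in H.
have cz i : lam i \in J -> c 0 i = 0 by move=> Ji; rewrite cE; exact: cJ.
clearbody c.
have entry j : (c *m (diag_mx X - (f E)%:M)) 0 j = c 0 j * (X 0 j - f E).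
  by rewrite mulmxBr mul_mx_diag mul_mx_scalar !mxE mulrBr [E%:C%C * _]mulrC.
have sqf (x : R) : `|f x| ^+ 2 = f (x ^+ 2).
  by rewrite sqr_normc conjc_real rmorphXn expr2.
have outJ j : lam j \notin J -> f eps ^+ 2 < `|X 0 j - f E| ^+ 2.
  move=> nJ; rewrite Xlam -rmorphB sqf -rmorphXn ltcR.
  have h : eps < `|lam j - E|.
    move: nJ; rewrite /J in_itv /= negb_and -!ltNge ltr_normr => /orP[h|h];
      apply/orP; [right|left]; lra.
  by rewrite -[(lam j - E) ^+ 2]real_normK ?num_real // ltr_pXn2r // nnegrE.
have le_j j : f eps ^+ 2 * `|c 0 j| ^+ 2 <= `|(c *m (diag_mx X - (f E)%:M)) 0 j| ^+ 2.
  rewrite entry normrM exprMn mulrC.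
  case: (boolP (lam j \in J)) => Jj; first by rewrite cz // normr0 expr0n /= !mul0r.
  by apply: ler_wpM2l; [exact: exprn_ge0 | exact: ltW (outJ _ Jj)].
have lt_j0 : f eps ^+ 2 * `|c 0 j0| ^+ 2 < `|(c *m (diag_mx X - (f E)%:M)) 0 j0| ^+ 2.
  have Jj0 : lam j0 \notin J by apply: contra cj0 => /cz ->.
  rewrite entry normrM exprMn mulrC ltr_pM2l ?outJ //.
  by rewrite exprn_gt0 // normr_gt0.
move: H; apply/negP; rewrite -real_ltNge; first last.
- by apply: ger0_real; apply: sumr_ge0 => j _; apply: exprn_ge0.
- apply: ger0_real; apply: mulr_ge0; first by rewrite -rmorphXn ler0c exprn_ge0.
  by apply: sumr_ge0 => j _; apply: exprn_ge0.
rewrite mulr_sumr (bigD1 j0) //= [X in _ < X](bigD1 j0) //=.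
by apply: ltr_leD => //; apply: ler_sum => j _.
Qed.

Lemma sumC n (x y : 'I_n -> R) :
  \sum_i (Complex (x i) (y i) : C) = Complex (\sum_i x i) (\sum_i y i).
Proof.
apply: (big_rec3 (fun z a b => z = Complex a b)) => // i z a b _ ->.
by [].
Qed.

Lemma mulC_entry n (w : 'rV[C]_n) (wr wi : 'rV[R]_n) (M : 'M[R]_n) j :
  (forall i, w 0 i = Complex (wr 0 i) (wi 0 i)) ->
  (w *m map_mx f M) 0 j = Complex ((wr *m M) 0 j) ((wi *m M) 0 j).
Proof.
move=> hw; rewrite !mxE -sumC; apply: eq_bigr => i _.
rewrite hw !mxE /=.
by apply/eqP; rewrite eq_complex /= !mulr0 subr0 add0r !eqxx.
Qed.


Lemma spec2R n (A : 'M[R]_n) (E eps : R) (u1 u2 : 'rV[R]_n) :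
  A^T = A -> 0 <= eps ->
  (forall a b : R, a *: u1 + b *: u2 = 0 -> a = 0 /\ b = 0) ->
  (forall a b : R, \sum_j ((a *: u1 + b *: u2) *m (A - E%:M)) 0 j ^+ 2
        <= eps ^+ 2 * \sum_j ((a *: u1 + b *: u2) 0 j) ^+ 2) ->
  (2 <= \rank (\sum_(x <- rootsR (char_poly A) | x \in (`[E - eps, E + eps])%R) eigenspace A x)%MS)%N.
Proof.
move=> As eps0 indep hyp.
have wE (a b : C) i : (a *: map_mx f u1 + b *: map_mx f u2) 0 i =
    Complex (((complex.Re a) *: u1 + (complex.Re b) *: u2) 0 i)
            (((complex.Im a) *: u1 + (complex.Im b) *: u2) 0 i).
  rewrite !mxE; case: a => ar ai; case: b => br bi /=.
  by apply/eqP; rewrite eq_complex /= !mulr0 !subr0 !add0r !eqxx.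
apply: (@spec2 _ _ _ _ (map_mx f u1) (map_mx f u2) As eps0).
  move=> a b /rowP h.
  have h1 i : ((complex.Re a) *: u1 + (complex.Re b) *: u2) 0 i = 0.
    by move: (congr1 (@complex.Re R) (etrans (esym (wE a b i)) (h i))) => /= ->; rewrite mxE.
  have h2 i : ((complex.Im a) *: u1 + (complex.Im b) *: u2) 0 i = 0.
    by move: (congr1 (@complex.Im R) (etrans (esym (wE a b i)) (h i))) => /= ->; rewrite mxE.
  have [ar0 br0] : complex.Re a = 0 /\ complex.Re b = 0.
    by apply: indep; apply/rowP => i; rewrite h1 mxE.
  have [ai0 bi0] : complex.Im a = 0 /\ complex.Im b = 0.
    by apply: indep; apply/rowP => i; rewrite h2 mxE.
  by clear h h1 h2; move: ar0 br0 ai0 bi0; case: a => ar ai; case: b => br bi /= -> -> -> ->.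
move=> a b.
have -> : map_mx f A - (f E)%:M = map_mx f (A - E%:M) by rewrite map_mxB map_scalar_mx.
set wr := (complex.Re a *: u1 + complex.Re b *: u2); set wi := (complex.Im a *: u1 + complex.Im b *: u2).
under eq_bigr => j _ do rewrite (mulC_entry _ _ (wE a b)) -add_Re2_Im2 /=.
under [X in _ <= _ * X]eq_bigr => j _ do rewrite wE -add_Re2_Im2 /=.
rewrite -!rmorph_sum -!rmorphXn -rmorphM lecR !big_split /= mulrDr.
by apply: lerD; apply: hyp.
Qed.

End Spec.
Section Main.
Variable R : realType.

Lemma evec_entry d (k i : 'I_d) : (evec k) 0 i = (i == k)%:R.
Proof. by rewrite /evec mxE eqxx /= eq_sym. Qed.

Lemma evecN_entry d (k i : 'I_d) : (- evec k) 0 i = - (i == k)%:R.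
Proof. by rewrite /evec !mxE eqxx /= eq_sym. Qed.

Lemma normsqE d (z : Zd d) : normsq R z = (\sum_i (z 0 i) ^+ 2)%:~R.
Proof. by rewrite /normsq rmorph_sum; apply: eq_bigr => i _; rewrite rmorphXn. Qed.

Lemma normsq_ind d (z : Zd d) :
  (if normsq R z == 1 then 1 else 0 : R) =
  \sum_k ((z == evec k)%:R + (z == - evec k)%:R).
Proof.
case: (boolP [exists k, (z == evec k) || (z == - evec k)]).
  move=> /existsP [k /orP hk].
  have ek : evec k != - evec k.
    apply/negP => /eqP /rowP /(_ k); rewrite evecN_entry evec_entry eqxx => /eqP.
    by rewrite -addr_eq0 -mulr2n pnatr_eq0.
  have nk k' : k' != k -> (z == evec k') = false /\ (z == - evec k') = false.
    move=> kk.
    have zk : z 0 k' = 0.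
      by case: hk => /eqP ->; rewrite ?evecN_entry ?evec_entry (negbTE kk) ?oppr0.
    split; apply/negP => /eqP zE; move: zk; rewrite zE ?evecN_entry ?evec_entry eqxx => /eqP;
      by rewrite ?oppr_eq0 oner_eq0.
  rewrite (bigD1 k) //= big1 ?addr0; last by move=> k' /nk [-> ->]; rewrite addr0.
  have -> : normsq R z = 1.
    rewrite normsqE (bigD1 k) //= big1 ?addr0.
      by case: hk => /eqP ->; rewrite ?evecN_entry ?evec_entry eqxx ?sqrrN expr1n.
    move=> i ik; case: hk => /eqP ->; rewrite ?evecN_entry ?evec_entry (negbTE ik) ?oppr0;
      by rewrite expr0n.
  rewrite eqxx.
  case: hk => /eqP ->; first by rewrite eqxx (negbTE ek) addr0.
  by rewrite eqxx [- _ == _]eq_sym (negbTE ek) add0r.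
move=> /existsPn H.
rewrite big1; last first.
  by move=> k _; move: (H k); rewrite negb_or => /andP [/negbTE -> /negbTE ->]; rewrite addr0.
case: ifP => // /eqP h; exfalso.
have S1 : \sum_i (z 0 i) ^+ 2 = 1.
  by apply/eqP; rewrite -(eqr_int R) -normsqE h.
have [k zk] : exists k, z 0 k != 0.
  apply/existsP; apply: contraT => /existsPn hz.
  move: S1; rewrite big1 // => i _; move: (hz i); rewrite negbK => /eqP ->.
  by rewrite expr0n.
rewrite (bigD1 k) //= in S1.
set r := \sum_(i | _) _ in S1.

have r0 : 0 <= r by apply: sumr_ge0 => i _; apply: sqr_ge0.
have t1 : 0 < (z 0 k) ^+ 2 by rewrite lt_def sqrf_eq0 zk sqr_ge0.
have [tk rz] : (z 0 k) ^+ 2 = 1 /\ r = 0 by lia.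
have oth i : i != k -> z 0 i = 0.
  move=> ik; move/eqP: rz; rewrite psumr_eq0; last by move=> *; apply: sqr_ge0.
  by move=> /allP /(_ i (mem_index_enum _)); rewrite ik /= sqrf_eq0 => /eqP.
move/eqP: tk; rewrite sqrf_eq1 => /orP [] /eqP zk1;
  move: (H k); rewrite negb_or => /andP [h1 h2]; [move: h1 | move: h2];
  apply/negP; rewrite negbK; apply/eqP/rowP => i;
  rewrite ?evecN_entry ?evec_entry; case: (eqVneq i k) => [->|ik];
  by rewrite ?zk1 ?oth // ?oppr0.
Qed.
End Main.
Section Box.
Variable R : realType.

Lemma boxK_int (L : R) : 0 <= L -> (boxK L)%:Z = Num.floor L + 1.
Proof.
move=> L0; rewrite /boxK -addn1 PoszD gez0_abs //.
by rewrite floor_ge0.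
Qed.

Lemma boxK_bounds (L : R) : 0 <= L -> L < (boxK L)%:R /\ (boxK L)%:R <= L + 1.
Proof.
move=> L0; have := floor_itv L; rewrite -[(boxK L)%:R]/((boxK L)%:Z%:~R) boxK_int //.
move=> /andP [h1 h2]; split => //.
by rewrite intrD lerD2r.
Qed.

Definition gbox d (L : R) (f : {ffun 'I_d -> 'I_((boxK L).*2.+1)}) : Zd d :=
  \row_i ((nat_of_ord (f i))%:Z - (boxK L)%:Z).

Lemma box_ptsE d (L : R) :
  box_pts d L = [seq x <- map (@gbox d L) (enum {ffun 'I_d -> 'I_((boxK L).*2.+1)}) | in_box L x].
Proof. by []. Qed.

Lemma box_uniq d (L : R) : uniq (box_pts d L).
Proof.
rewrite box_ptsE filter_uniq // map_inj_uniq ?enum_uniq //.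
move=> f1 f2 /rowP h; apply/ffunP => i; move: (h i); rewrite !mxE => /addIr.
by move=> [] /val_inj.
Qed.

Lemma mem_box d (L : R) (x : Zd d) : (x \in box_pts d L) = in_box L x.
Proof.
rewrite box_ptsE mem_filter; case ib : (in_box L x) => //=.
set K := boxK L.
have bnd i : `|x 0 i| < K%:Z.
  move/forallP: ib => /(_ i) hi.
  have L0 : 0 <= L by have := normr_ge0 ((x 0 i)%:~R : R); lra.
  have [hK _] := boxK_bounds L0.
  rewrite -(ltr_int R) intr_norm; rewrite -/K in hK.
  have -> : (K%:Z)%:~R = K%:R :> R by [].
  lra.
apply/mapP; exists [ffun i => inord (absz (x 0 i + K%:Z))]; first by rewrite mem_enum.
apply/rowP => i; rewrite !mxE ffunE inordK.
  have := bnd i; rewrite /K ltr_norml; move: (x 0 i) (boxK L) => y k; lia.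
have := bnd i; rewrite /K ltr_norml; lia.
Qed.

Lemma size_box d (L : R) : (size (box_pts d L) <= ((boxK L).*2.+1) ^ d)%N.
Proof.
rewrite box_ptsE size_filter; apply: leq_trans (count_size _ _) _.
by rewrite size_map -cardE card_ffun !card_ord.
Qed.

End Box.
Section Err.
Variable R : realType.

Lemma sum_seq_eq (T : eqType) (s : seq T) (F : T -> R) z : uniq s ->
  \sum_(y <- s) F y * (y == z)%:R = (z \in s)%:R * F z.
Proof.
move=> us; case: (boolP (z \in s)) => zs.
  rewrite (big_rem z) //= eqxx mulr1 mul1r big1_seq ?addr0 // => y /andP [_ ys].
  have : y != z by apply: contraTneq ys => ->; rewrite mem_rem_uniqF.
  by move/negbTE => ->; rewrite mulr0.
rewrite big1_seq ?mul0r // => y /andP [_ ys]; have : y != z by apply: contraNneq zs => <-.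
by move/negbTE => ->; rewrite mulr0.
Qed.

Lemma sum_ord_seq (T : zmodType) (s : seq T) (G : T -> R) :
  \sum_(i < size s) G s`_i = \sum_(y <- s) G y.
Proof. by rewrite (big_nth 0) big_mkord. Qed.

Lemma Delta_sym d (x y : Zd d) : Delta R x y = Delta R y x.
Proof.
rewrite /Delta /normsq; congr (if _ == _ then _ else _).
by apply: eq_bigr => i _; rewrite -opprB mxE rmorphN sqrrN.
Qed.

Lemma HL_sym d (V : Zd d -> R) L : (HL V L)^T = HL V L.
Proof.
apply/matrixP => i j; rewrite !mxE Delta_sym.
by case: (eqVneq i j) => [->|ij] //; rewrite !mul0r.
Qed.

Lemma err_eq d (V : Zd d -> R) (E L : R) (psi : Zd d -> R) :
  (forall x, Hop V psi x = E * psi x) ->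
  forall j,
  ((\row_i psi (box_pts d L)`_i) *m (HL V L - E%:M)) 0 j =
  \sum_k ((((box_pts d L)`_j + evec k) \notin box_pts d L)%:R * psi ((box_pts d L)`_j + evec k)
        + (((box_pts d L)`_j - evec k) \notin box_pts d L)%:R * psi ((box_pts d L)`_j - evec k)).
Proof.
move=> eig j.
set s := box_pts d L; set x := s`_j.
have us : uniq s := box_uniq d L.
rewrite mulmxBr mul_mx_scalar !mxE.
under eq_bigr => i _ do rewrite !mxE mulrDr.
rewrite big_split /=.
have -> : \sum_(i < size s) psi s`_i * ((i == j)%:R * V s`_i) = psi x * V x.
  rewrite (bigD1 j) //= eqxx mul1r big1 ?addr0 // => i ij.
  by rewrite (negbTE ij) mul0r mulr0.
have -> : \sum_(i < size s) psi s`_i * - Delta R s`_i x =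
    - \sum_k ((x + evec k \in s)%:R * psi (x + evec k) + (x - evec k \in s)%:R * psi (x - evec k)).
  have -> : \sum_(i < size s) psi s`_i * - Delta R s`_i x = - \sum_(i < size s) psi s`_i * Delta R s`_i x.
    by rewrite -sumrN; apply: eq_bigr => i _; rewrite mulrN.
  congr (- _).
  under eq_bigr => i _ do rewrite /Delta normsq_ind mulr_sumr.
  rewrite exchange_big /=; apply: eq_bigr => k _.
  under eq_bigr => i _ do rewrite mulrDr.
  rewrite big_split /=; congr (_ + _).
    rewrite (@sum_ord_seq _ s (fun y => psi y * ((y - x) == evec k)%:R)).
    rewrite -(sum_seq_eq psi (x + evec k) us); apply: eq_bigr => y _.
    by rewrite subr_eq addrC.
  rewrite (@sum_ord_seq _ s (fun y => psi y * ((y - x) == - evec k)%:R)).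
  rewrite -(sum_seq_eq psi (x - evec k) us); apply: eq_bigr => y _.
  by rewrite subr_eq addrC.
have := eig x; rewrite /Hop => ex.
have -> : psi x * V x = E * psi x + \sum_k (psi (x + evec k) + psi (x - evec k)) by lra.
rewrite mulrC [psi x * E + _]addrC addrA addrK addrC -sumrB.
apply: eq_bigr => k _.
by case: (x + evec k \in s); case: (x - evec k \in s) => /=; lra.
Qed.

End Err.
Section Aux.
Variable R : realType.

Lemma Hop_lin d (V : Zd d -> R) (E a b : R) (phi1 phi2 : Zd d -> R) :
  (forall x, Hop V phi1 x = E * phi1 x) -> (forall x, Hop V phi2 x = E * phi2 x) ->
  forall x, Hop V (fun y => a * phi1 y + b * phi2 y) x = E * (a * phi1 x + b * phi2 x).
Proof.
move=> e1 e2 x; move: (e1 x) (e2 x); rewrite /Hop => h1 h2.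
have -> : \sum_i (a * phi1 (x + evec i) + b * phi2 (x + evec i) +
       (a * phi1 (x - evec i) + b * phi2 (x - evec i))) =
   a * \sum_i (phi1 (x + evec i) + phi1 (x - evec i)) +
   b * \sum_i (phi2 (x + evec i) + phi2 (x - evec i)).
  rewrite !mulr_sumr -big_split; apply: eq_bigr => i _ /=; ring.
set s1 := \sum_i _ in h1; set s2 := \sum_i _ in h2.
have -> : \sum_i (phi1 (x + evec i) + phi1 (x - evec i)) = s1 by [].
have -> : \sum_i (phi2 (x + evec i) + phi2 (x - evec i)) = s2 by [].
have e1' : s1 = V x * phi1 x - E * phi1 x by lra.
have e2' : s2 = V x * phi2 x - E * phi2 x by lra.
rewrite e1' e2'; ring.
Qed.

Lemma normsq_ge0 d (x : Zd d) : 0 <= normsq R x.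
Proof. by apply: sumr_ge0 => i _; apply: sqr_ge0. Qed.

Lemma japan_out d (L : R) (y : Zd d) : 0 <= L -> ~~ in_box L y -> L / 2 <= japan R y.
Proof.
move=> L0; rewrite /in_box; case/forallPn => i; rewrite -leNgt => hi.
rewrite /japan -[L / 2]ger0_norm ?divr_ge0 // -sqrtr_sqr.
apply: ler_wsqrtr.
have : (y 0 i)%:~R ^+ 2 <= normsq R y.
  rewrite /normsq (bigD1 i) //= lerDl; apply: sumr_ge0 => k _; apply: sqr_ge0.
have : (L / 2) ^+ 2 <= (y 0 i)%:~R ^+ 2 :> R.
  rewrite -[X in _ <= X]real_normK ?num_real //.
  by rewrite ler_pXn2r ?nnegrE // ?divr_ge0.
lra.
Qed.

Lemma decay_out d (L beta Cphi : R) (phi : Zd d -> R) (y : Zd d) :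
  0 < L -> 0 <= beta -> 0 <= Cphi ->
  (forall x, `|phi x| <= Cphi * (japan R x) `^ (- beta)) ->
  ~~ in_box L y -> `|phi y| <= Cphi * (L / 2) `^ (- beta).
Proof.
move=> L0 b0 C0 hphi yout.
apply: le_trans (hphi y) _; apply: ler_wpM2l => //.
have hj := japan_out (ltW L0) yout.
have L2 : 0 < L / 2 by rewrite divr_gt0.
rewrite !powRN lef_pV2 ?posrE ?powR_gt0 //; last exact: lt_le_trans hj.
by apply: ge0_ler_powR => //; rewrite nnegrE ltW // (lt_le_trans L2 hj).
Qed.

Lemma decay_C0 d (beta Cphi : R) (phi : Zd d -> R) :
  (forall x, `|phi x| <= Cphi * (japan R x) `^ (- beta)) -> 0 <= Cphi.
Proof.
move=> h; have := h 0.
have -> : japan R (0 : Zd d) = 1.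
  rewrite /japan /normsq big1 ?addr0 ?sqrtr1 // => i _; rewrite mxE expr0n.
  by [].
rewrite powR1 mulr1 => h0; exact: le_trans (normr_ge0 _) h0.
Qed.

Lemma lower2 (a b p1 p2 q1 q2 : R) : p1 * q2 - p2 * q1 != 0 ->
  (`|a| + `|b|) ^+ 2 <= 2 * ((`|p1| + `|p2| + `|q1| + `|q2|) / `|p1 * q2 - p2 * q1|) ^+ 2 *
     ((a * p1 + b * p2) ^+ 2 + (a * q1 + b * q2) ^+ 2).
Proof.
move=> D0; set D := p1 * q2 - p2 * q1; set s := a * p1 + b * p2; set t := a * q1 + b * q2.
set G := `|p1| + `|p2| + `|q1| + `|q2|.
have aD : a * D = s * q2 - t * p2 by rewrite /D /s /t; ring.
have bD : b * D = t * p1 - s * q1 by rewrite /D /s /t; ring.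
have ha : `|a| * `|D| <= `|s| * `|q2| + `|t| * `|p2|.
  by rewrite -normrM aD -!normrM; apply: le_trans (ler_normB _ _) _.
have hb : `|b| * `|D| <= `|t| * `|p1| + `|s| * `|q1|.
  by rewrite -normrM bD -!normrM; apply: le_trans (ler_normB _ _) _.
have Dp : 0 < `|D| by rewrite normr_gt0.
have hab : (`|a| + `|b|) * `|D| <= (`|s| + `|t|) * G.
  rewrite /G; have := normr_ge0 s; have := normr_ge0 t; have := normr_ge0 p1;
  have := normr_ge0 p2; have := normr_ge0 q1; have := normr_ge0 q2; nra.
have hab' : `|a| + `|b| <= (`|s| + `|t|) * (G / `|D|).
  by rewrite mulrA ler_pdivlMr.
have st : (`|s| + `|t|) ^+ 2 <= 2 * (s ^+ 2 + t ^+ 2).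
  rewrite -(real_normK (num_real s)) -(real_normK (num_real t)).
  have := sqr_ge0 (`|s| - `|t|); nra.
have K0 : 0 <= G / `|D| by rewrite divr_ge0 // /G; have := normr_ge0 p1;
  have := normr_ge0 p2; have := normr_ge0 q1; have := normr_ge0 q2; lra.
have ab0 : 0 <= `|a| + `|b| by have := normr_ge0 a; have := normr_ge0 b; lra.
have : (`|a| + `|b|) ^+ 2 <= ((`|s| + `|t|) * (G / `|D|)) ^+ 2.
  rewrite ler_pXn2r ?nnegrE //; apply: mulr_ge0 => //.
rewrite exprMn => h; apply: le_trans h _.
have K2 := exprn_ge0 2 K0.
set k := (G / `|D|) ^+ 2 in K2 *.
set u := (`|s| + `|t|) ^+ 2 in st *.
set v := s ^+ 2 + t ^+ 2 in st *.
nra.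
Qed.

End Aux.

Unset Implicit Arguments.
Theorem lemma1 (R : realType) (d : nat) (beta : R) (hbeta : d%:R / 2 < beta)
    (phi1 phi2 : Zd d -> R)
    (l2_1 : sq_summable phi1) (l2_2 : sq_summable phi2)
    (dec1 : has_decay beta phi1) (dec2 : has_decay beta phi2)
    (indep : lin_indep2 phi1 phi2) :
  exists C : R, forall (V : Zd d -> R) (E : R),
    (forall x, Hop V phi1 x = E * phi1 x) ->
    (forall x, Hop V phi2 x = E * phi2 x) ->
    exists L0 : R, forall L : R, L0 <= L ->
      let epsL := C * L `^ (- beta + d%:R / 2) in
      (2 <= tr_specproj (`[E - epsL, E + epsL])%R (HL V L))%N.
Proof.
have b0 : 0 <= beta.
  have h : 0 <= d%:R / 2 :> R by rewrite divr_ge0 // ler0n.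
  lra.
have [p [q Dn0]] : exists p q, phi1 p * phi2 q - phi2 p * phi1 q != 0.
  apply: contrapT => nh.
  have H p q : phi1 p * phi2 q - phi2 p * phi1 q = 0.
    by apply/eqP; apply: contrapT => /negP hpq; apply: nh; exists p, q.
  case: (pselect (forall x, phi1 x = 0)) => [h0 | /existsNP [p0 hp0]].
    have [h1 _] : (1:R) = 0 /\ (0:R) = 0.
      by apply: indep => x; rewrite h0 mulr0 mul0r addr0.
    by move/eqP: h1; rewrite oner_eq0.
  have [_ h2] : phi2 p0 = 0 /\ - phi1 p0 = 0.
    apply: indep => x; have -> : phi2 p0 * phi1 x + - phi1 p0 * phi2 x =
      - (phi1 p0 * phi2 x - phi2 p0 * phi1 x) by ring.
    by rewrite H oppr0.
  by apply: hp0; move/eqP: h2; rewrite oppr_eq0 => /eqP.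
case: dec1 => C1 hC1; case: dec2 => C2 hC2.
have C10 := decay_C0 hC1; have C20 := decay_C0 hC2.
set D := phi1 p * phi2 q - phi2 p * phi1 q.
set G := `|phi1 p| + `|phi2 p| + `|phi1 q| + `|phi2 q|.
set K1 := G / `|D|.
set Cm := C1 + C2.
set K0 := 5%:R ^+ d * 8 * (d%:R) ^+ 2 * Cm ^+ 2 * (2 `^ beta) ^+ 2 * K1 ^+ 2.
have G0 : 0 <= G by rewrite /G !addr_ge0.
have Cm0 : 0 <= Cm by rewrite addr_ge0.
have K10 : 0 <= K1 by rewrite divr_ge0.
have K00 : 0 <= K0.
  by rewrite /K0; repeat apply: mulr_ge0; rewrite ?exprn_ge0 ?ler0n ?powR_ge0.
exists (K0 + 1); move=> V E eig1 eig2.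
set Sp := \sum_i (`|((p 0 i)%:~R : R)| + `|((q 0 i)%:~R : R)|).
exists (2 * (1 + Sp)); move=> L hL; cbv zeta.
set epsL := (K0 + 1) * L `^ (- beta + d%:R / 2).
have Sp0 : 0 <= Sp by apply: sumr_ge0 => i _; apply: addr_ge0.
have L1 : 1 <= L by lra.
have L0 : 0 < L by lra.
have coordle i : `|((p 0 i)%:~R : R)| + `|((q 0 i)%:~R : R)| <= Sp.
  rewrite /Sp (bigD1 i) //= lerDl; apply: sumr_ge0 => k _.
  exact: addr_ge0 (normr_ge0 _) (normr_ge0 _).
have pin : in_box L p.
  rewrite /in_box; apply/forallP => k; have := coordle k; have := normr_ge0 ((q 0 k)%:~R : R); lra.
have qin : in_box L q.
  rewrite /in_box; apply/forallP => k; have := coordle k; have := normr_ge0 ((p 0 k)%:~R : R); lra.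
set s := box_pts d L.
have ps : p \in s by rewrite mem_box.
have qs : q \in s by rewrite mem_box.
have ipl : (index p s < size s)%N by rewrite index_mem.
have iql : (index q s < size s)%N by rewrite index_mem.
pose ip : 'I_(size s) := Ordinal ipl.
pose iq : 'I_(size s) := Ordinal iql.
have sp : s`_ip = p by rewrite nth_index.
have sq : s`_iq = q by rewrite nth_index.
have ipq : ip != iq.
  apply/negP => /eqP h; have pq : p = q by rewrite -sp -sq h.
  by move: Dn0; rewrite -/D /D pq mulrC subrr eqxx.
have eps0 : 0 <= epsL by rewrite /epsL mulr_ge0 ?powR_ge0 // addr_ge0.
rewrite /tr_specproj.
apply: (@spec2R _ _ (HL V L) E epsL (\row_j phi1 s`_j) (\row_j phi2 s`_j) (HL_sym V L) eps0).
  move=> a b /rowP h; have hp := h ip; have hq := h iq.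
  rewrite !mxE sp in hp; rewrite !mxE sq in hq.
  have aD : a * D = 0.
    have -> : a * D = (a * phi1 p + b * phi2 p) * phi2 q - (a * phi1 q + b * phi2 q) * phi2 p.
      by rewrite /D; ring.
    by rewrite hp hq !mul0r subrr.
  have bD : b * D = 0.
    have -> : b * D = (a * phi1 q + b * phi2 q) * phi1 p - (a * phi1 p + b * phi2 p) * phi1 q.
      by rewrite /D; ring.
    by rewrite hp hq !mul0r subrr.
  by split; apply/eqP; [move/eqP: aD | move/eqP: bD]; rewrite mulf_eq0 (negbTE Dn0) orbF.
move=> a b.
set psi := fun y => a * phi1 y + b * phi2 y.
have wE : a *: (\row_(j < size s) phi1 s`_j) + b *: (\row_(j < size s) phi2 s`_j) = \row_(j < size s) psi s`_j.
  by apply/rowP => j; rewrite !mxE.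
rewrite wE.
have eigpsi : forall x, Hop V psi x = E * psi x := Hop_lin a b eig1 eig2.
under eq_bigr => j _ do rewrite (err_eq eigpsi).
under [X in _ <= _ * X]eq_bigr => j _ do rewrite mxE.
set M := (L / 2) `^ (- beta).
have M0 : 0 <= M := powR_ge0 _ _.
set B := (`|a| + `|b|) * (Cm * M).
have ab0 : 0 <= `|a| + `|b| by rewrite addr_ge0.
have B0 : 0 <= B by rewrite /B mulr_ge0 // mulr_ge0.
have bnd y : `|(y \notin s)%:R * psi y| <= B.
  case: (boolP (y \in s)) => ys /=; first by rewrite mul0r normr0.
  rewrite mul1r.
  have yout : ~~ in_box L y by rewrite -mem_box.
  have h1 := decay_out L0 b0 C10 hC1 yout.
  have h2 := decay_out L0 b0 C20 hC2 yout.
  rewrite /psi; apply: le_trans (ler_normD _ _) _; rewrite !normrM.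
  have e1 : `|a| * `|phi1 y| <= `|a| * (C1 * M) by apply: ler_wpM2l.
  have e2 : `|b| * `|phi2 y| <= `|b| * (C2 * M) by apply: ler_wpM2l.
  have e3 : 0 <= `|a| * (C2 * M) by rewrite mulr_ge0 // mulr_ge0.
  have e4 : 0 <= `|b| * (C1 * M) by rewrite mulr_ge0 // mulr_ge0.
  rewrite /B /Cm; lra.
rewrite -/s.
set T := d%:R * (B + B).
have T0 : 0 <= T by rewrite /T mulr_ge0 ?ler0n ?addr_ge0.
have errb (x : Zd d) : (\sum_(k < d) ((x + evec k \notin s)%:R * psi (x + evec k) +
    (x - evec k \notin s)%:R * psi (x - evec k))) ^+ 2 <= T ^+ 2.
  rewrite -real_normK ?num_real // ler_pXn2r ?nnegrE ?normr_ge0 //.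
  apply: le_trans (ler_norm_sum _ _ _) _.
  apply: le_trans (@ler_sum _ _ _ _ _ (fun _ => B + B) _) _.
    by move=> k _; apply: le_trans (ler_normD _ _) _; apply: lerD; apply: bnd.
  by rewrite sumr_const card_ord /T mulr_natl.
apply: le_trans (@ler_sum _ _ _ _ _ (fun _ => T ^+ 2) _) _.
  by move=> j _; apply: errb.
rewrite sumr_const card_ord -mulr_natl.
set W := \sum_(j < size s) psi s`_j ^+ 2.
have W0 : 0 <= W by apply: sumr_ge0 => j _; apply: sqr_ge0.
have Wge : psi p ^+ 2 + psi q ^+ 2 <= W.
  rewrite /W (bigD1 ip) //= (bigD1 iq) /=; last by rewrite eq_sym ipq.
  rewrite sp sq addrA lerDl; apply: sumr_ge0 => j _; apply: sqr_ge0.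
have low := @lower2 R a b (phi1 p) (phi2 p) (phi1 q) (phi2 q) Dn0.
have nle : (size s)%:R <= 5%:R ^+ d * L ^+ d :> R.
  have h := size_box d L.
  have [Kb1 Kb2] := boxK_bounds (ltW L0).
  apply: (@le_trans _ _ (((boxK L).*2.+1 ^ d)%:R)); first by rewrite ler_nat.
  rewrite natrX -exprMn; apply: lerXn2r; rewrite ?nnegrE ?ler0n ?mulr_ge0 ?ler0n ?(ltW L0) //.
  rewrite -addn1 -mul2n natrD natrM.
  have -> : (2%:R : R) = 2 by [].
  lra.
set P := L `^ (- beta).
have P0 : 0 <= P := powR_ge0 _ _.
have Mdef : M = P * 2 `^ beta.
  rewrite /M /P powRM ?invr_ge0 ?ler0n ?(ltW L0) //; congr (_ * _).
  have h2 : 2 `^ beta * (2^-1) `^ beta = 1 :> R.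
    by rewrite -powRM ?invr_ge0 ?ler0n // divff ?pnatr_eq0 // powR1.
  by rewrite powRN -(mulr1_eq h2) invrK.
have epsE : epsL ^+ 2 = (K0 + 1) ^+ 2 * (P ^+ 2 * L ^+ d).
  rewrite /epsL exprMn powRD; last by rewrite (gt_eqF L0) implybT.
  rewrite exprMn -/P; congr (_ * (_ * _)).
  rewrite expr2 -powRD; last by rewrite (gt_eqF L0) implybT.
  have -> : d%:R / 2 + d%:R / 2 = d%:R :> R by lra.
  by rewrite powR_mulrn // ltW.
have Tdef : T ^+ 2 = 4 * d%:R ^+ 2 * Cm ^+ 2 * (P * 2 `^ beta) ^+ 2 * (`|a| + `|b|) ^+ 2.
  by rewrite /T /B Mdef; ring.
rewrite Tdef epsE.
set X := 4 * d%:R ^+ 2 * Cm ^+ 2 * (P * 2 `^ beta) ^+ 2.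
have X0 : 0 <= X by rewrite /X; repeat apply: mulr_ge0; rewrite ?exprn_ge0 ?ler0n ?mulr_ge0 ?powR_ge0.
have step1 : (size s)%:R * (X * (`|a| + `|b|) ^+ 2) <= 5%:R ^+ d * L ^+ d * (X * (2 * K1 ^+ 2 * W)).
  apply: ler_pM => //; first by rewrite mulr_ge0 ?exprn_ge0.
  apply: ler_wpM2l => //; apply: le_trans low _.
  by apply: ler_wpM2l => //; rewrite mulr_ge0 ?exprn_ge0.
have Y0 : 0 <= P ^+ 2 * L ^+ d * W by rewrite !mulr_ge0 ?exprn_ge0 ?(ltW L0).
have step2 : K0 * (P ^+ 2 * L ^+ d * W) <= (K0 + 1) ^+ 2 * (P ^+ 2 * L ^+ d * W).
  by apply: ler_wpM2r => //; nra.
have e1 : 5%:R ^+ d * L ^+ d * (X * (2 * K1 ^+ 2 * W)) = K0 * (P ^+ 2 * L ^+ d * W).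
  by rewrite /X /K0; ring.
apply: le_trans step1 _; rewrite e1 -[X in _ <= X]mulrA; exact: step2.
Qed.
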